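(* Let $(P_{ij})$ be an $(m+1)\times(d+1)$ non-negative matrix (indices $i\in\{0,\dots,m\}$, $j\in\{0,\dots,d\}$, $d\ge1$) with $\sum_iP_{ij}=1$ for all $j$, and let $P:\mathbb{R}^{d+1}_0\to\mathbb{R}^{m+1}_0$ be the associated linear map. Suppose there exists $\theta>0$ such that for every pair $j_1,j_2\in\{0,\dots,d\}$ there exists $i_0\in\{0,\dots,m\}$ with $P_{i_0j_1}\ge\theta$ and $P_{i_0j_2}\ge\theta$. Then the operator norm satisfies $\|P\|\le 1-\theta/d$.
   Context: $\mathbb{R}^n$ carries the $L^1$ norm $\|a\|=\sum_i|a_i|$, and $\mathbb{R}^n_0=\{a\in\mathbb{R}^n:\sum_ia_i=0\}$. Since column sums of $P$ are $1$, $P$ maps $\mathbb{R}^{d+1}_0$ into $\mathbb{R}^{m+1}_0$; the norm is taken with respect to the $L^1$ norms on these subspaces. *)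

(* Defs.v *)
From HB Require Import structures.
From mathcomp Require Import all_boot all_order all_algebra.
Set Implicit Arguments. Unset Strict Implicit. Unset Printing Implicit Defensive.
Import Order.TTheory GRing.Theory Num.Theory.
Local Open Scope ring_scope.

Definition l1norm (R : numDomainType) (n : nat) (a : 'cV[R]_n) : R :=
  \sum_(i < n) `|a i 0|.

Definition zero_sum (R : numDomainType) (n : nat) (a : 'cV[R]_n) : Prop :=
  \sum_(i < n) a i 0 = 0.

(* ||P|| <= c, where ||.|| is the operator norm of the linear map
   a |-> P a from R^n_0 to R^m_0, both carrying the L^1 norm:
   i.e. ||P a||_1 <= c ||a||_1 for every a in R^n_0. *)
Definition opnorm0_le (R : numDomainType) (m n : nat)
    (P : 'M[R]_(m, n)) (c : R) : Prop :=
  forall a : 'cV[R]_n, zero_sum a -> l1norm (P *m a) <= c * l1norm a.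

(* Main.v *)
Require Import Defs.
From HB Require Import structures.
From mathcomp Require Import all_boot all_order all_algebra.
From mathcomp Require Import ring lra.
Import Order.TTheory GRing.Theory Num.Theory.
Local Open Scope ring_scope.

Section Aux.
Variable R : realFieldType.

Definition pp (x : R) := if 0 <= x then x else 0.
Definition nn (x : R) := if 0 <= x then 0 else - x.

Lemma pp_ge0 x : 0 <= pp x.
Proof. rewrite /pp; case: ifP => // /negbT; rewrite -ltNge; lra. Qed.
Lemma nn_ge0 x : 0 <= nn x.
Proof. rewrite /nn; case: ifP => // /negbT; rewrite -ltNge; lra. Qed.
Lemma ppnnB x : pp x - nn x = x.
Proof. rewrite /pp /nn; case: ifP => _; lra. Qed.
Lemma ppnnD x : pp x + nn x = `|x|.
Proof. rewrite /pp /nn; case: ifP => h.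
  by rewrite ger0_norm // addr0.
move/negbT: h; rewrite -ltNge => h; rewrite ltr0_norm //; lra. Qed.

Lemma pair_bound (m d : nat) (P : 'M[R]_(m.+1, d.+1)) theta j k :
  (forall i j, 0 <= P i j) ->
  (forall j, \sum_(i < m.+1) P i j = 1) ->
  (exists i0 : 'I_m.+1, theta <= P i0 j /\ theta <= P i0 k) ->
  \sum_i `|P i j - P i k| <= 2 - 2 * theta.
Proof.
move=> P0 Ps [i0 [h1 h2]].
have -> : 2 - 2 * theta = \sum_i (P i j + P i k) - 2 * theta.
  by rewrite big_split /= !Ps.
rewrite (bigD1 i0) //= [X in _ <= X - _](bigD1 i0) //=.
have : \sum_(i | i != i0) `|P i j - P i k| <= \sum_(i | i != i0) (P i j + P i k).
  apply: ler_sum => i _; have := P0 i j; have := P0 i k.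
  case: (lerP 0 (P i j - P i k)) => h.
    by rewrite ger0_norm //; lra.
  by rewrite ltr0_norm //; lra.
have : `|P i0 j - P i0 k| <= P i0 j + P i0 k - 2 * theta.
  case: (lerP 0 (P i0 j - P i0 k)) => h.
    by rewrite ger0_norm //; lra.
  by rewrite ltr0_norm //; lra.
lra.
Qed.

End Aux.
Arguments pp {R}. Arguments nn {R}. Arguments pp_ge0 {R}. Arguments nn_ge0 {R}.
Arguments ppnnB {R}. Arguments ppnnD {R}. Arguments pair_bound {R m d}.

Theorem lemma4p6 (R : realFieldType) (m d : nat) (P : 'M[R]_(m.+1, d.+1))
  (theta : R) :
  (1 <= d)%N ->
  (forall i j, 0 <= P i j) ->
  (forall j, \sum_(i < m.+1) P i j = 1) ->
  0 < theta ->
  (forall j1 j2 : 'I_d.+1, exists i0 : 'I_m.+1,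
      theta <= P i0 j1 /\ theta <= P i0 j2) ->
  opnorm0_le P (1 - theta / d%:R).
Proof.
move=> d1 P0 Ps th0 Hth a az.
rewrite /zero_sum in az.
set ap := fun j : 'I_d.+1 => pp (a j 0).
set an := fun j : 'I_d.+1 => nn (a j 0).
set s := \sum_j ap j.
have apn : \sum_j an j = s.
  apply/eqP; rewrite eq_sym -subr_eq0 -sumrB -[X in _ == X]az.
  by apply/eqP; apply: eq_bigr => j _; rewrite /ap /an ppnnB.
have la : l1norm a = 2 * s.
  rewrite /l1norm (eq_bigr (fun j => ap j + an j)); last by move=> j _; rewrite ppnnD.
  by rewrite big_split /= apn -/s mulr2n mulrDl mul1r.
have s0 : 0 <= s by apply: sumr_ge0 => j _; exact: pp_ge0.
have key : forall i, s * (P *m a) i 0 =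
    \sum_j \sum_k ap j * an k * (P i j - P i k).
  move=> i; rewrite mxE.
  rewrite [RHS](_ : _ = \sum_j (\sum_k ap j * an k * P i j - \sum_k ap j * an k * P i k)); last first.
    apply: eq_bigr => j _; rewrite -sumrB; apply: eq_bigr => k _; ring.
  rewrite sumrB (exchange_big _ _ _ _ _ (fun j k => ap j * an k * P i k)) /=.
  have -> : \sum_j \sum_k ap j * an k * P i j = s * \sum_j ap j * P i j.
    rewrite mulr_sumr; apply: eq_bigr => j _.
    rewrite -apn mulr_suml; apply: eq_bigr => k _; ring.
  have -> : \sum_k \sum_j ap j * an k * P i k = s * \sum_k an k * P i k.
    rewrite mulr_sumr; apply: eq_bigr => k _.
    rewrite mulr_suml; apply: eq_bigr => j _; ring.
  rewrite -mulrBr -sumrB; congr (_ * _); apply: eq_bigr => j _.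
  rewrite -mulrBl /ap /an ppnnB; ring.
have main : s * l1norm (P *m a) <= (2 - 2 * theta) * (s * s).
  rewrite /l1norm mulr_sumr.
  apply: (le_trans (y := \sum_i \sum_j \sum_k ap j * an k * `|P i j - P i k|)).
    apply: ler_sum => i _.
    rewrite -{1}(ger0_norm s0) -normrM key.
    apply: (le_trans (ler_norm_sum _ _ _)); apply: ler_sum => j _.
    apply: (le_trans (ler_norm_sum _ _ _)); apply: ler_sum => k _.
    rewrite normrM ger0_norm //; apply: mulr_ge0; [exact: pp_ge0|exact: nn_ge0].
  rewrite exchange_big /=.
  apply: (le_trans (y := \sum_j \sum_k ap j * an k * (2 - 2 * theta))).
    apply: ler_sum => j _; rewrite exchange_big /=; apply: ler_sum => k _.
    rewrite -mulr_sumr; apply: ler_wpM2l.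
      apply: mulr_ge0; [exact: pp_ge0|exact: nn_ge0].
    by apply: pair_bound.
  have -> : (2 - 2 * theta) * (s * s) = \sum_j ap j * (\sum_k an k * (2 - 2 * theta)).
    rewrite -!mulr_suml apn -/s; rewrite mulrC mulrA //.
  apply: ler_sum => j _; rewrite mulr_sumr; apply: ler_sum => k _.
  by rewrite mulrA.
have dpos : 1 <= d%:R :> R by rewrite ler1n.
have thd : theta / d%:R <= theta.
  rewrite ler_pdivrMr; last lra.
  by rewrite -{1}(mulr1 theta) ler_wpM2l //; lra.
have Pa0 : 0 <= l1norm (P *m a) by apply: sumr_ge0 => i _.
rewrite la.
case: (lerP s 0) => hs.
  have -> : s = 0 by apply/eqP; rewrite eq_le hs s0.
  have Hz : forall j, a j 0 = 0.
    move=> j; apply/eqP; rewrite -normr_eq0 eq_le normr_ge0 andbT.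
    have : `|a j 0| <= l1norm a.
      rewrite /l1norm (bigD1 j) //= lerDl; exact: sumr_ge0.
    rewrite la; lra.
  have -> : l1norm (P *m a) = 0.
    rewrite /l1norm big1 // => i _; rewrite mxE big1 ?normr0 // => j _.
    by rewrite Hz mulr0.
  lra.
have : l1norm (P *m a) <= (2 - 2 * theta) * s.
  rewrite -(ler_pM2l hs); lra.
nra.
Qed.
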